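(* Let $b\in\mathbb{Z}\setminus\{1,-1\}$ be odd. Then the $D_2$-symmetric curves $g^\varepsilon$ representing the torus knot class $\mathcal{T}(2,b)$, defined in the context, converge strongly in $W^{2,2}(\mathbb{R}/\mathbb{Z},\mathbb{R}^3)$ to the curve $\mathrm{tpc}[\pi]$ as $\varepsilon\to0$.
   Context: $R_1=\mathrm{diag}(1,-1,-1)$, $R_2=\mathrm{diag}(-1,1,-1)$, $R_3=\mathrm{diag}(-1,-1,1)$. For an arc $\alpha:[0,1/4]\to\mathbb{R}^3$ let $G[\alpha]$ be the $1$-periodic curve with $G[\alpha](t)=\alpha(t)$ on $[0,1/4)$, $R_1\alpha(1/2-t)$ on $[1/4,1/2)$, $R_2\alpha(t-1/2)$ on $[1/2,3/4)$, $R_3\alpha(1-t)$ on $[3/4,1)$. Define $\mathrm{tpc}[\pi]=G[\alpha_2]$ with $\alpha_2(t)=\frac1{4\pi}(1-\cos4\pi t,\ \sin4\pi t,\ 0)$ (a planar figure-eight of two tangent circles of radius $1/(4\pi)$). Construction for odd $b\ge3$ and $0<\varepsilon<1/(4(b+1))$: set $\rho=\varepsilon^2$ and $r=(1/4-(b+1)\varepsilon)/\pi>0$. Let $\phi(t)=t$ for $t\in[0,\frac{b-1}2]$, $\phi(t)=\frac b2-\frac12(t-\frac{b+1}2)^2$ for $t\in[\frac{b-1}2,\frac{b+1}2]$, $\phi(t)=\frac b2$ for $t\ge\frac{b+1}2$, and $\phi_\varepsilon(t)=\pi\phi(t/\varepsilon)$. Helical part: $h^\varepsilon(t)=(\rho(-1)^{(b-1)/2}\sin\phi_\varepsilon(t),\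 t,\ \rho\cos\phi_\varepsilon(t))$. Stadium part: for $t\in[\frac{(b+1)\varepsilon}2,\frac14-\frac{(b+1)\varepsilon}2]$, $\sigma^\varepsilon(t)=(\rho+r-r\cos(\frac1r(t-\frac{(b+1)\varepsilon}2)),\ \frac{(b+1)\varepsilon}2+r\sin(\frac1r(t-\frac{(b+1)\varepsilon}2)),\ 0)$; for $t\in[\frac14-\frac{(b+1)\varepsilon}2,\frac14]$, $\sigma^\varepsilon(t)=(\rho+2r,\ \frac14-t,\ 0)$. Let $\alpha^\varepsilon=h^\varepsilon$ on $[0,\frac{(b+1)\varepsilon}2]$ and $\alpha^\varepsilon=\sigma^\varepsilon$ on $(\frac{(b+1)\varepsilon}2,\frac14]$, and $g^\varepsilon=G[\alpha^\varepsilon]$; this is a $C^{1,1}$ closed $D_2$-symmetric curve of knot type $\mathcal{T}(2,b)$. For odd $b\le-3$, let $g^\varepsilon$ be the image under the reflection $(x,y,z)\mapsto(x,y,-z)$ of the curve constructed for $|b|$; it is $D_2$-symmetric and of knot type $\mathcal{T}(2,b)$. *)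

(* Defs.v *)
From Stdlib Require Import Reals ZArith.
From Coquelicot Require Import Coquelicot.
Open Scope R_scope.

Definition v3 : Type := (R * R * R)%type.
Definition mk3 (x y z : R) : v3 := (x, y, z).
Definition cx (p : v3) : R := fst (fst p).
Definition cy (p : v3) : R := snd (fst p).
Definition cz (p : v3) : R := snd p.

Definition Rf1 (p : v3) : v3 := mk3 (cx p) (- cy p) (- cz p).
Definition Rf2 (p : v3) : v3 := mk3 (- cx p) (cy p) (- cz p).
Definition Rf3 (p : v3) : v3 := mk3 (- cx p) (- cy p) (cz p).

Definition Gcurve (alpha : R -> v3) (t : R) : v3 :=
  let s := frac_part t in
  if Rlt_dec s (1/4) then alpha s
  else if Rlt_dec s (1/2) then Rf1 (alpha (1/2 - s))
  else if Rlt_dec s (3/4) then Rf2 (alpha (s - 1/2))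
  else Rf3 (alpha (1 - s)).

Definition alpha2 (t : R) : v3 :=
  mk3 (/(4*PI) * (1 - cos (4*PI*t))) (/(4*PI) * sin (4*PI*t)) 0.
Definition tpc_pi : R -> v3 := Gcurve alpha2.

(* The construction for odd b >= 3 (b given as a natural number). *)
Definition phi_b (b : nat) (t : R) : R :=
  let B := INR b in
  if Rle_dec t ((B - 1)/2) then t
  else if Rle_dec t ((B + 1)/2) then B/2 - /2 * (t - (B + 1)/2)^2
  else B/2.
Definition phi_eps (b : nat) (eps t : R) : R := PI * phi_b b (t / eps).
Definition rho_eps (eps : R) : R := eps ^ 2.
Definition r_eps (b : nat) (eps : R) : R := (/4 - (INR b + 1) * eps) / PI.

Definition helix (b : nat) (eps t : R) : v3 :=
  mk3 (rho_eps eps * (-1) ^ ((b - 1) / 2)%nat * sin (phi_eps b eps t))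
      t
      (rho_eps eps * cos (phi_eps b eps t)).

Definition stadium (b : nat) (eps t : R) : v3 :=
  let c := (INR b + 1) * eps / 2 in
  let r := r_eps b eps in
  let rho := rho_eps eps in
  if Rle_dec t (/4 - c) then
    mk3 (rho + r - r * cos (/r * (t - c))) (c + r * sin (/r * (t - c))) 0
  else mk3 (rho + 2 * r) (/4 - t) 0.

Definition alpha_eps (b : nat) (eps t : R) : v3 :=
  if Rle_dec t ((INR b + 1) * eps / 2) then helix b eps t else stadium b eps t.

Definition g_pos (b : nat) (eps : R) : R -> v3 := Gcurve (alpha_eps b eps).

Definition reflz (p : v3) : v3 := mk3 (cx p) (cy p) (- cz p).

Definition g_eps (b : Z) (eps : R) : R -> v3 :=
  if Z.ltb 0 b then g_pos (Z.to_nat b) eps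
  else fun t => reflz (g_pos (Z.to_nat (- b)) eps t).

(* Squared W^{2,2}(R/Z) norm of a 1-periodic scalar function, computed
   with classical (a.e.) derivatives over one period [0,1]. *)
Definition W22sq (u : R -> R) : R :=
  RInt (fun t => (u t)^2 + (Derive u t)^2 + (Derive (Derive u) t)^2) 0 1.

Definition W22dist (f g : R -> v3) : R :=
  sqrt (W22sq (fun t => cx (f t) - cx (g t))
      + W22sq (fun t => cy (f t) - cy (g t))
      + W22sq (fun t => cz (f t) - cz (g t))).

(* Main.v *)
Require Import Defs.
From Stdlib Require Import Reals ZArith Lra.
From Coquelicot Require Import Coquelicot.
Open Scope R_scope.
From Stdlib Require Import Lia.

Definition integ (F : R -> R) (t : R) : R :=
  (F t)^2 + (Derive F t)^2 + (Derive (Derive F) t)^2.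

Lemma loc_open (P : R -> Prop) (u v s : R) :
  u < s < v -> (forall y, u < y < v -> P y) -> locally s P.
Proof.
  intros Hs HP.
  assert (Hd : 0 < Rmin (s - u) (v - s)) by (apply Rmin_pos; lra).
  exists (mkposreal _ Hd). intros y Hy.
  apply HP. unfold ball in Hy; simpl in Hy; unfold AbsRing_ball, abs, minus, plus, opp in Hy; simpl in Hy.
  apply Rabs_lt_between in Hy.
  pose proof (Rmin_l (s-u) (v-s)). pose proof (Rmin_r (s-u) (v-s)). lra.
Qed.

Lemma piece_gen (F f f1 f2 : R -> R) (u v m h e K : R) :
  u < v -> m*m = 1 -> e*e = 1 ->
  (forall s, u < s < v -> F s = e * f (m*s+h)) ->
  (forall x, is_derive f x (f1 x)) -> (forall x, is_derive f1 x (f2 x)) ->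
  (forall x, continuous f2 x) ->
  (forall s, u <= s <= v -> Rabs (f (m*s+h)) <= K /\ Rabs (f1 (m*s+h)) <= K
                              /\ Rabs (f2 (m*s+h)) <= K) ->
  exists V, is_RInt (integ F) u v V /\ 0 <= V <= 3*K^2*(v-u).
Proof.
  intros Huv Hm He HF Hd1 Hd2 Hc Hb.
  set (g := fun s => e * f (m*s+h)).
  set (g1 := fun s => e * m * f1 (m*s+h)).
  set (g2 := fun s => e * m * m * f2 (m*s+h)).
  assert (Dg : forall s, is_derive g s (g1 s)).
  { intros s. unfold g, g1.
    assert (H := is_derive_comp f (fun s => m*s+h) s (f1 (m*s+h)) m (Hd1 _)).
    assert (Hl : is_derive (fun s => m*s+h) s m).
    { auto_derive; auto; ring. }
    specialize (H Hl).
    apply is_derive_scal with (k := e) in H.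
    replace (e*m*f1(m*s+h)) with (scal e (scal m (f1 (m*s+h)))).
    exact H. unfold scal; simpl; unfold mult; simpl; ring. }
  assert (Dg1 : forall s, is_derive g1 s (g2 s)).
  { intros s. unfold g1, g2.
    assert (H := is_derive_comp f1 (fun s => m*s+h) s (f2 (m*s+h)) m (Hd2 _)).
    assert (Hl : is_derive (fun s => m*s+h) s m).
    { auto_derive; auto; ring. }
    specialize (H Hl).
    apply is_derive_scal with (k := e*m) in H.
    replace (e*m*m*f2(m*s+h)) with (scal (e*m) (scal m (f2 (m*s+h)))).
    exact H. unfold scal; simpl; unfold mult; simpl; ring. }
  assert (E1 : forall s, u < s < v -> Derive F s = g1 s).
  { intros s Hs. rewrite (Derive_ext_loc F g s).
    apply is_derive_unique; apply Dg.
    apply (loc_open _ u v s Hs). intros y Hy; apply HF; auto. }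
  assert (E2 : forall s, u < s < v -> Derive (Derive F) s = g2 s).
  { intros s Hs. rewrite (Derive_ext_loc (Derive F) g1 s).
    apply is_derive_unique; apply Dg1.
    apply (loc_open _ u v s Hs). intros y Hy; apply E1; auto. }
  set (H := fun s => (f (m*s+h))^2 + (f1 (m*s+h))^2 + (f2 (m*s+h))^2).
  assert (EH : forall s, u < s < v -> integ F s = H s).
  { intros s Hs. unfold integ, H. rewrite E1, E2, HF by auto.
    unfold g1, g2.
    replace ((e * f (m * s + h)) ^ 2) with ((e*e) * f (m*s+h) ^2) by ring.
    replace ((e * m * f1 (m * s + h)) ^ 2) with ((e*e)*(m*m) * f1 (m*s+h) ^2) by ring.
    replace ((e * m * m * f2 (m * s + h)) ^ 2) with ((e*e)*(m*m)*(m*m) * f2 (m*s+h) ^2) by ring.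
    rewrite He, Hm. ring. }
  assert (CH : forall s, continuous H s).
  { intros s. unfold H.
    assert (CA : continuous (fun s => m*s+h) s).
    { apply (ex_derive_continuous (fun s : R => m*s+h)). auto_derive; auto. }
    assert (C0 : continuous (fun s => f (m*s+h)) s).
    { apply (continuous_comp (fun s => m*s+h) f); auto. apply (ex_derive_continuous f). eexists; apply Hd1. }
    assert (C1 : continuous (fun s => f1 (m*s+h)) s).
    { apply (continuous_comp (fun s => m*s+h) f1); auto. apply (ex_derive_continuous f1). eexists; apply Hd2. }
    assert (C2 : continuous (fun s => f2 (m*s+h)) s).
    { apply (continuous_comp (fun s => m*s+h) f2); auto. }
    apply continuity_pt_filterlim in C0. apply continuity_pt_filterlim in C1.
    apply continuity_pt_filterlim in C2. apply continuity_pt_filterlim.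
    repeat (apply continuity_pt_plus || apply continuity_pt_mult); auto;
      apply continuity_pt_const; intros ? ?; reflexivity. }
  assert (XH : ex_RInt H u v).
  { apply (ex_RInt_continuous (V:=R_CompleteNormedModule)); intros; apply CH. }
  exists (RInt H u v). split.
  { apply is_RInt_ext with H.
    intros x Hx. rewrite Rmin_left in Hx by lra. rewrite Rmax_right in Hx by lra.
    symmetry; apply EH; auto.
    apply (RInt_correct (V:=R_CompleteNormedModule)); auto. }
  split.
  { apply RInt_ge_0; auto. lra. intros x _. unfold H. nra. }
  { replace (3*K^2*(v-u)) with (RInt (fun _ => 3*K^2) u v).
    apply RInt_le; auto. lra. apply ex_RInt_const.
    intros x Hx. destruct (Hb x) as [B0 [B1 B2]]. lra.
    unfold H.
    assert (forall y K, Rabs y <= K -> y^2 <= K^2).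
    { intros y K0 Hy. pose proof (Rabs_pos y). rewrite <- (pow2_abs y). apply pow_incr; lra. }
    apply H0 in B0. apply H0 in B1. apply H0 in B2. lra.
    rewrite RInt_const. unfold scal; simpl; unfold mult; simpl. ring. }
Qed.

Definition Qpiece (D : R -> R) (p q K : R) :=
  exists f f1 f2 : R -> R, (forall x, is_derive f x (f1 x)) /\ (forall x, is_derive f1 x (f2 x))
   /\ (forall x, continuous f2 x)
   /\ (forall t, p <= t <= q -> Rabs (f t) <= K /\ Rabs (f1 t) <= K /\ Rabs (f2 t) <= K)
   /\ (forall t, p < t < q -> D t = f t).

Definition QRel (F D : R -> R) :=
  (forall s, 0 < s < 1/4 -> F s = D s) /\
  (exists e, e*e = 1 /\ forall s, 1/4 < s < 1/2 -> F s = e * D (1/2 - s)) /\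
  (exists e, e*e = 1 /\ forall s, 1/2 < s < 3/4 -> F s = e * D (s - 1/2)) /\
  (exists e, e*e = 1 /\ forall s, 3/4 < s < 1 -> F s = e * D (1 - s)).

Lemma Qint F D p q K : QRel F D -> Qpiece D p q K -> 0 <= p < q -> q <= 1/4 ->
  exists V1 V2 V3 V4, is_RInt (integ F) p q V1 /\ is_RInt (integ F) (1/2-q) (1/2-p) V2
   /\ is_RInt (integ F) (1/2+p) (1/2+q) V3 /\ is_RInt (integ F) (1-q) (1-p) V4
   /\ 0 <= V1 <= 3*K^2*(q-p) /\ 0 <= V2 <= 3*K^2*(q-p)
   /\ 0 <= V3 <= 3*K^2*(q-p) /\ 0 <= V4 <= 3*K^2*(q-p).
Proof.
  intros [Q1 [[e2 [He2 Q2]] [[e3 [He3 Q3]] [e4 [He4 Q4]]]]] [f [f1 [f2 [D1 [D2 [C [B E]]]]]]] Hpq Hq.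
  destruct (piece_gen F f f1 f2 p q 1 0 1 K) as [V1 [I1 B1]]; auto; try lra.
  { intros s Hs. replace (1*s+0) with s by ring. rewrite Q1 by lra. rewrite E by lra. ring. }
  { intros s Hs. replace (1*s+0) with s by ring. apply B; lra. }
  destruct (piece_gen F f f1 f2 (1/2-q) (1/2-p) (-1) (1/2) e2 K) as [V2 [I2 B2]]; auto; try lra.
  { intros s Hs. replace (-1*s+1/2) with (1/2-s) by ring. rewrite Q2 by lra. rewrite E by lra. ring. }
  { intros s Hs. apply B; lra. }
  destruct (piece_gen F f f1 f2 (1/2+p) (1/2+q) 1 (-1/2) e3 K) as [V3 [I3 B3]]; auto; try lra.
  { intros s Hs. replace (1*s+(-1/2)) with (s-1/2) by lra. rewrite Q3 by lra. rewrite E by lra. ring. }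
  { intros s Hs. apply B; lra. }
  destruct (piece_gen F f f1 f2 (1-q) (1-p) (-1) 1 e4 K) as [V4 [I4 B4]]; auto; try lra.
  { intros s Hs. replace (-1*s+1) with (1-s) by ring. rewrite Q4 by lra. rewrite E by lra. ring. }
  { intros s Hs. apply B; lra. }
  exists V1, V2, V3, V4.
  replace (1/2-p-(1/2-q)) with (q-p) in B2 by ring.
  replace (1/2+q-(1/2+p)) with (q-p) in B3 by ring.
  replace (1-p-(1-q)) with (q-p) in B4 by ring.
  repeat split; auto; lra.
Qed.

Lemma ch (f : R -> R) a b b' c l1 l2 : b = b' -> is_RInt f a b l1 -> is_RInt f b' c l2 ->
  is_RInt f a c (l1 + l2).
Proof. intros -> H1 H2. exact (is_RInt_Chasles (V:=R_NormedModule) f a b' c l1 l2 H1 H2). Qed.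

Lemma ends (f : R -> R) a b a' b' l : a = a' -> b = b' -> is_RInt f a b l -> is_RInt f a' b' l.
Proof. intros -> ->; auto. Qed.

Lemma ch2 (f : R -> R) a b b' c l1 l2 : is_RInt f a b l1 -> is_RInt f b' c l2 -> b = b' ->
  is_RInt f a c (l1 + l2).
Proof. intros H1 H2 ->. exact (is_RInt_Chasles (V:=R_NormedModule) f a b' c l1 l2 H1 H2). Qed.

Ltac stp T I := let H := fresh in pose proof (ch2 _ _ _ _ _ _ _ T I) as H;
  specialize (H ltac:(lra)); clear T; rename H into T.

Lemma total F D p1 c K0 Kc : QRel F D -> Qpiece D 0 p1 K0 -> Qpiece D p1 c K0 ->
  Qpiece D c (1/4-c) Kc -> Qpiece D (1/4-c) (1/4) K0 -> 0 < p1 < c -> c < 1/4 - c ->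
  W22sq F <= 12*(K0^2*(2*c) + Kc^2*(1/4)).
Proof.
  intros Q PA PB PC PD H1 H2.
  destruct (Qint F D 0 p1 K0 Q PA) as [a1 [a2 [a3 [a4 [Ia1 [Ia2 [Ia3 [Ia4 [Ba1 [Ba2 [Ba3 Ba4]]]]]]]]]]]; try lra.
  destruct (Qint F D p1 c K0 Q PB) as [b1 [b2 [b3 [b4 [Ib1 [Ib2 [Ib3 [Ib4 [Bb1 [Bb2 [Bb3 Bb4]]]]]]]]]]]; try lra.
  destruct (Qint F D c (1/4-c) Kc Q PC) as [c1 [c2 [c3 [c4 [Ic1 [Ic2 [Ic3 [Ic4 [Bc1 [Bc2 [Bc3 Bc4]]]]]]]]]]]; try lra.
  destruct (Qint F D (1/4-c) (1/4) K0 Q PD) as [d1 [d2 [d3 [d4 [Id1 [Id2 [Id3 [Id4 [Bd1 [Bd2 [Bd3 Bd4]]]]]]]]]]]; try lra.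
  assert (T : is_RInt (integ F) 0 1
    (a1 + b1 + c1 + d1 + d2 + c2 + b2 + a2 + a3 + b3 + c3 + d3 + d4 + c4 + b4 + a4)).
  { replace (1-0) with 1 in Ia4 by ring.
    pose proof (ch2 _ _ _ _ _ _ _ Ia1 Ib1) as T. specialize (T ltac:(lra)).
    stp T Ic1. stp T Id1. stp T Id2. stp T Ic2. stp T Ib2. stp T Ia2.
    stp T Ia3. stp T Ib3. stp T Ic3. stp T Id3. stp T Id4. stp T Ic4. stp T Ib4. stp T Ia4.
    replace (1/2-0) with (1/2) in * by ring.
    exact T. }
  change (RInt (integ F) 0 1 <= 12*(K0^2*(2*c) + Kc^2*(1/4))).
  rewrite (is_RInt_unique _ _ _ _ T).
  assert (0 <= Kc^2 * c) by (apply Rmult_le_pos; nra).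
  assert (0 <= K0^2) by nra.
  nra.
Qed.

Lemma frac_id s : 0 <= s < 1 -> frac_part s = s.
Proof.
  intros Hs. unfold frac_part. destruct (base_Int_part s) as [H1 H2].
  assert (Int_part s = 0%Z).
  { assert (IZR (Int_part s) < 1) by lra. assert (-1 < IZR (Int_part s)) by lra.
    apply lt_IZR in H. apply lt_IZR in H0. lia. }
  rewrite H. simpl. ring.
Qed.

Lemma Gq1 α s : 0 < s < 1/4 -> Gcurve α s = α s.
Proof. intros Hs. unfold Gcurve. rewrite frac_id by lra. destruct (Rlt_dec s (1/4)); [auto|lra]. Qed.
Lemma Gq2 α s : 1/4 < s < 1/2 -> Gcurve α s = Rf1 (α (1/2 - s)).
Proof. intros Hs. unfold Gcurve. rewrite frac_id by lra. destruct (Rlt_dec s (1/4)); [lra|].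
  destruct (Rlt_dec s (1/2)); [auto|lra]. Qed.
Lemma Gq3 α s : 1/2 < s < 3/4 -> Gcurve α s = Rf2 (α (s - 1/2)).
Proof. intros Hs. unfold Gcurve. rewrite frac_id by lra. destruct (Rlt_dec s (1/4)); [lra|].
  destruct (Rlt_dec s (1/2)); [lra|]. destruct (Rlt_dec s (3/4)); [auto|lra]. Qed.
Lemma Gq4 α s : 3/4 < s < 1 -> Gcurve α s = Rf3 (α (1 - s)).
Proof. intros Hs. unfold Gcurve. rewrite frac_id by lra. destruct (Rlt_dec s (1/4)); [lra|].
  destruct (Rlt_dec s (1/2)); [lra|]. destruct (Rlt_dec s (3/4)); [lra|auto]. Qed.

Lemma QR_x (c : R -> v3) α β : (forall t, cx (c t) = cx (Gcurve α t)) ->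
  QRel (fun t => cx (c t) - cx (Gcurve β t)) (fun t => cx (α t) - cx (β t)).
Proof.
  intros H. repeat split.
  - intros s Hs; rewrite H, !Gq1 by lra; reflexivity.
  - exists 1; split; [ring| intros s Hs; rewrite H, !Gq2 by lra; unfold Rf1, cx, cy, cz, mk3; simpl; ring].
  - exists (-1); split; [ring| intros s Hs; rewrite H, !Gq3 by lra; unfold Rf2, cx, cy, cz, mk3; simpl; ring].
  - exists (-1); split; [ring| intros s Hs; rewrite H, !Gq4 by lra; unfold Rf3, cx, cy, cz, mk3; simpl; ring].
Qed.

Lemma QR_y (c : R -> v3) α β : (forall t, cy (c t) = cy (Gcurve α t)) ->
  QRel (fun t => cy (c t) - cy (Gcurve β t)) (fun t => cy (α t) - cy (β t)).
Proof.
  intros H. repeat split.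
  - intros s Hs; rewrite H, !Gq1 by lra; reflexivity.
  - exists (-1); split; [ring| intros s Hs; rewrite H, !Gq2 by lra; unfold Rf1, cx, cy, cz, mk3; simpl; ring].
  - exists 1; split; [ring| intros s Hs; rewrite H, !Gq3 by lra; unfold Rf2, cx, cy, cz, mk3; simpl; ring].
  - exists (-1); split; [ring| intros s Hs; rewrite H, !Gq4 by lra; unfold Rf3, cx, cy, cz, mk3; simpl; ring].
Qed.

Lemma QR_z (c : R -> v3) α β z : (forall t, cz (c t) = z * cz (Gcurve α t)) ->
  QRel (fun t => cz (c t) - cz (Gcurve β t)) (fun t => z * cz (α t) - cz (β t)).
Proof.
  intros H. repeat split.
  - intros s Hs; rewrite H, !Gq1 by lra; reflexivity.
  - exists (-1); split; [ring| intros s Hs; rewrite H, !Gq2 by lra; unfold Rf1, cx, cy, cz, mk3; simpl; ring].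
  - exists (-1); split; [ring| intros s Hs; rewrite H, !Gq3 by lra; unfold Rf2, cx, cy, cz, mk3; simpl; ring].
  - exists 1; split; [ring| intros s Hs; rewrite H, !Gq4 by lra; unfold Rf3, cx, cy, cz, mk3; simpl; ring].
Qed.

Lemma ab_add a b A B : Rabs a <= A -> Rabs b <= B -> Rabs (a+b) <= A+B.
Proof. intros. pose proof (Rabs_triang a b). lra. Qed.
Lemma ab_sub a b A B : Rabs a <= A -> Rabs b <= B -> Rabs (a-b) <= A+B.
Proof. intros. pose proof (Rabs_triang a (-b)). rewrite Rabs_Ropp in H1. unfold Rminus. lra. Qed.
Lemma ab_mul a b A B : Rabs a <= A -> Rabs b <= B -> Rabs (a*b) <= A*B.
Proof. intros. rewrite Rabs_mult. apply Rmult_le_compat; auto; apply Rabs_pos. Qed.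
Lemma ab_opp a A : Rabs a <= A -> Rabs (-a) <= A.
Proof. rewrite Rabs_Ropp; auto. Qed.
Lemma ab_sin x : Rabs (sin x) <= 1.
Proof. apply Rabs_le; apply SIN_bound. Qed.
Lemma ab_cos x : Rabs (cos x) <= 1.
Proof. apply Rabs_le; apply COS_bound. Qed.
Lemma ab_pow1 k : Rabs ((-1)^k) <= 1.
Proof. rewrite pow_1_abs; lra. Qed.
Lemma ab_refl a : Rabs a <= Rabs a.
Proof. lra. Qed.
Lemma ab_one : Rabs 1 <= 1.
Proof. rewrite Rabs_R1; lra. Qed.

Ltac bnd := first [ match goal with H : Rabs ?x <= _ |- Rabs ?x <= _ => exact H end | apply ab_sin | apply ab_cos | apply ab_pow1 | apply ab_one
  | apply ab_add; bnd | apply ab_sub; bnd | apply ab_mul; bnd | apply ab_opp; bnd | apply ab_refl ].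

Ltac bound := eapply Rle_trans; [ bnd | ].

Definition Hyp (n : nat) (eps z : R) :=
  (3 <= n)%nat /\ 0 < eps /\ (INR n + 1) * eps <= 1/8 /\ z*z = 1.

Definition Dx n eps := fun t => cx (alpha_eps n eps t) - cx (alpha2 t).
Definition Dy n eps := fun t => cy (alpha_eps n eps t) - cy (alpha2 t).
Definition Dz n eps z := fun t => z * cz (alpha_eps n eps t) - cz (alpha2 t).

Lemma Hyp_facts n eps z : Hyp n eps z ->
  3 <= INR n /\ 0 < eps /\ eps <= 1/32 /\ Rabs z <= 1 /\ 2 < PI /\ PI <= 4
  /\ Rabs (rho_eps eps) <= eps /\ Rabs (/(4*PI)) <= 1/8 /\ Rabs PI <= 4 /\ Rabs (4*PI) <= 16
  /\ Rabs eps <= 1/32.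
Proof.
  intros [Hn [He [HL Hz]]].
  assert (3 <= INR n) by (apply le_INR in Hn; simpl in Hn; lra).
  assert (eps <= 1/32) by nra.
  pose proof PI2_1. pose proof PI_4.
  assert (Rabs z <= 1).
  { rewrite <- (Rabs_R1). apply Req_le. assert (Rabs z * Rabs z = 1) by (rewrite <- Rabs_mult, Hz; apply Rabs_R1).
    rewrite Rabs_R1. pose proof (Rabs_pos z). nra. }
  repeat split; try lra.
  - unfold rho_eps. rewrite Rabs_pos_eq by nra. nra.
  - rewrite Rabs_pos_eq. apply Rmult_le_reg_l with (4*PI). lra. rewrite Rinv_r by lra. lra.
    left; apply Rinv_0_lt_compat; lra.
  - rewrite Rabs_pos_eq; lra.
  - rewrite Rabs_pos_eq; lra.
  - rewrite Rabs_pos_eq; lra.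
Qed.

Lemma divle t e x : 0 < e -> t <= x * e -> t / e <= x.
Proof. intros He H. unfold Rdiv. apply Rmult_le_reg_r with e; auto. rewrite Rmult_assoc, Rinv_l by lra. lra. Qed.
Lemma divge t e x : 0 < e -> x * e <= t -> x <= t / e.
Proof. intros He H. unfold Rdiv. apply Rmult_le_reg_r with e; auto. rewrite Rmult_assoc, Rinv_l by lra. lra. Qed.

Ltac facts H := destruct (Hyp_facts _ _ _ H) as [Fn [Fe [Fe1 [Fz [FP1 [FP2 [Frho [Fa [FPI [F4PI Fea]]]]]]]]]]; pose proof H as [_ [_ [FL _]]].

Lemma QA1x n eps z : Hyp n eps z -> Qpiece (Dx n eps) 0 ((INR n - 1)*eps/2) 50.
Proof.
  intros H. facts H.
  exists (fun t => rho_eps eps * (-1)^((n-1)/2) * sin (PI * (t/eps)) - /(4*PI) * (1 - cos (4*PI*t))).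
  exists (fun t => eps*PI*(-1)^((n-1)/2)*cos(PI*(t/eps)) - sin(4*PI*t)).
  exists (fun t => -(PI*PI)*(-1)^((n-1)/2)*sin(PI*(t/eps)) - 4*PI*cos(4*PI*t)).
  refine (conj _ (conj _ (conj _ (conj _ _)))).
  - intros x. unfold rho_eps. set (sg := (-1)^((n-1)/2)); clearbody sg. auto_derive; auto. unfold Rdiv. field. lra.
  - intros x. set (sg := (-1)^((n-1)/2)); clearbody sg. auto_derive; auto. unfold Rdiv. field. lra.
  - intros x. apply (ex_derive_continuous (fun t => -(PI*PI)*(-1)^((n-1)/2)*sin(PI*(t/eps)) - 4*PI*cos(4*PI*t))).
    auto_derive; auto.
  - intros t Ht. split; [|split].
    + bound. lra.
    + bound. lra.
    + bound. nra.
  - intros t Ht. unfold Dx, alpha_eps, helix, phi_eps, phi_b, alpha2, cx, mk3; simpl.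
    destruct (Rle_dec t ((INR n + 1) * eps / 2)); [|lra].
    destruct (Rle_dec (t/eps) ((INR n - 1)/2)). reflexivity.
    exfalso; apply n0. apply divle; lra.
Qed.

Lemma divlt t e x : 0 < e -> x * e < t -> x < t / e.
Proof. intros He H. unfold Rdiv. apply Rmult_lt_reg_r with e; auto. rewrite Rmult_assoc, Rinv_l by lra. lra. Qed.

Lemma QHy n eps z p q : Hyp n eps z -> 0 <= p -> q <= (INR n + 1)*eps/2 -> Qpiece (Dy n eps) p q 50.
Proof.
  intros H Hp Hq. facts H.
  exists (fun t => t - /(4*PI) * sin (4*PI*t)).
  exists (fun t => 1 - cos (4*PI*t)).
  exists (fun t => 4*PI * sin (4*PI*t)).
  refine (conj _ (conj _ (conj _ (conj _ _)))).
  - intros x. auto_derive; auto. unfold Rdiv. field. lra.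
  - intros x. auto_derive; auto. unfold Rdiv. field.
  - intros x. apply (ex_derive_continuous (fun t => 4*PI * sin (4*PI*t))). auto_derive; auto.
  - intros t Ht. assert (Rabs t <= 1) by (apply Rabs_le; nra). split; [|split].
    + bound. lra.
    + bound. lra.
    + bound. lra.
  - intros t Ht. unfold Dy, alpha_eps, helix, alpha2, cy, mk3; simpl.
    destruct (Rle_dec t ((INR n + 1) * eps / 2)); [reflexivity|lra].
Qed.

Lemma QA1z n eps z : Hyp n eps z -> Qpiece (Dz n eps z) 0 ((INR n - 1)*eps/2) 50.
Proof.
  intros H. facts H.
  exists (fun t => z * (rho_eps eps * cos (PI * (t/eps))) - 0).
  exists (fun t => - z * eps * PI * sin (PI * (t/eps))).
  exists (fun t => - z * PI * PI * cos (PI * (t/eps))).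
  refine (conj _ (conj _ (conj _ (conj _ _)))).
  - intros x. unfold rho_eps. auto_derive; auto. unfold Rdiv. field. lra.
  - intros x. auto_derive; auto. unfold Rdiv. field. lra.
  - intros x. apply (ex_derive_continuous (fun t => - z * PI * PI * cos (PI * (t/eps)))). auto_derive; auto.
  - intros t Ht. assert (Rabs 0 <= 0) by (rewrite Rabs_R0; lra). split; [|split].
    + bound. nra.
    + bound. nra.
    + bound. nra.
  - intros t Ht. unfold Dz, alpha_eps, helix, phi_eps, phi_b, alpha2, cz, mk3; simpl.
    destruct (Rle_dec t ((INR n + 1) * eps / 2)); [|lra].
    destruct (Rle_dec (t/eps) ((INR n - 1)/2)). reflexivity.
    exfalso; apply n0. apply divle; lra.
Qed.

Lemma Wbound n eps t : 0 < eps -> (INR n - 1)*eps/2 <= t <= (INR n + 1)*eps/2 ->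
  Rabs (t/eps - (INR n + 1)/2) <= 1.
Proof.
  intros He Ht. assert ((INR n - 1)/2 <= t/eps) by (apply divge; lra).
  assert (t/eps <= (INR n + 1)/2) by (apply divle; lra).
  apply Rabs_le; lra.
Qed.

Definition PhiA n eps t := PI * (INR n / 2 - / 2 * (t / eps - (INR n + 1) / 2) ^ 2).
Definition WA n eps t := t / eps - (INR n + 1) / 2.
Lemma PhiA_d n eps x : 0 < eps -> Derive (PhiA n eps) x = - (PI * WA n eps x / eps).
Proof. intros He. apply is_derive_unique. unfold PhiA, WA. auto_derive; auto. unfold Rdiv. field. lra. Qed.
Lemma WA_d n eps x : 0 < eps -> Derive (WA n eps) x = / eps.
Proof. intros He. apply is_derive_unique. unfold WA. auto_derive; auto. unfold Rdiv. field. lra. Qed.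
Lemma PhiA_e n eps x : ex_derive (PhiA n eps) x.
Proof. unfold PhiA. auto_derive; auto. Qed.
Lemma WA_e n eps x : ex_derive (WA n eps) x.
Proof. unfold WA. auto_derive; auto. Qed.

Lemma QA2x n eps z : Hyp n eps z ->
  Qpiece (Dx n eps) ((INR n - 1)*eps/2) ((INR n + 1)*eps/2) 50.
Proof.
  intros H. facts H.
  exists (fun t => rho_eps eps * (-1)^((n-1)/2) * sin (PhiA n eps t) - /(4*PI) * (1 - cos (4*PI*t))).
  exists (fun t => (-1)^((n-1)/2) * cos (PhiA n eps t) * (-(eps*PI*WA n eps t)) - sin(4*PI*t)).
  exists (fun t => (-1)^((n-1)/2) * (-(PI*PI*WA n eps t*WA n eps t) * sin (PhiA n eps t) - PI * cos (PhiA n eps t)) - 4*PI*cos(4*PI*t)).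
  refine (conj _ (conj _ (conj _ (conj _ _)))).
  - intros x. unfold rho_eps. set (sg := (-1)^((n-1)/2)); clearbody sg. auto_derive; auto using PhiA_e, WA_e. rewrite ?PhiA_d, ?WA_d by lra. unfold Rdiv. field. lra.
  - intros x. set (sg := (-1)^((n-1)/2)); clearbody sg. auto_derive; auto using PhiA_e, WA_e. rewrite ?PhiA_d, ?WA_d by lra. unfold Rdiv. field. lra.
  - intros x. set (sg := (-1)^((n-1)/2)); clearbody sg.
    match goal with |- continuous ?f _ => apply (ex_derive_continuous f) end. auto_derive; auto using PhiA_e, WA_e.
  - intros t Ht. pose proof (Wbound n eps t Fe Ht). split; [|split].
    + bound. lra.
    + bound. nra.
    + bound. nra.
  - intros t Ht. unfold Dx, alpha_eps, helix, phi_eps, phi_b, alpha2, cx, mk3; simpl.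
    destruct (Rle_dec t ((INR n + 1) * eps / 2)); [|lra].
    destruct (Rle_dec (t/eps) ((INR n - 1)/2)).
    { exfalso. assert ((INR n - 1)/2 < t/eps) by (apply divlt; lra). lra. }
    destruct (Rle_dec (t/eps) ((INR n + 1)/2)). reflexivity.
    exfalso; apply n1. apply divle; lra.
Qed.

Lemma QA2z n eps z : Hyp n eps z ->
  Qpiece (Dz n eps z) ((INR n - 1)*eps/2) ((INR n + 1)*eps/2) 50.
Proof.
  intros H. facts H.
  exists (fun t => z * (rho_eps eps * cos (PhiA n eps t)) - 0).
  exists (fun t => z * eps * PI * WA n eps t * sin (PhiA n eps t)).
  exists (fun t => z * (-(PI*PI*WA n eps t*WA n eps t) * cos (PhiA n eps t) + PI * sin (PhiA n eps t))).
  refine (conj _ (conj _ (conj _ (conj _ _)))).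
  - intros x. unfold rho_eps. auto_derive; auto using PhiA_e, WA_e. rewrite ?PhiA_d, ?WA_d by lra. unfold Rdiv. field. lra.
  - intros x. auto_derive; auto using PhiA_e, WA_e. rewrite ?PhiA_d, ?WA_d by lra. unfold Rdiv. field. lra.
  - intros x.
    match goal with |- continuous ?f _ => apply (ex_derive_continuous f) end. auto_derive; auto using PhiA_e, WA_e.
  - intros t Ht. pose proof (Wbound n eps t Fe Ht). assert (Rabs 0 <= 0) by (rewrite Rabs_R0; lra). split; [|split].
    + bound. nra.
    + bound. nra.
    + bound. nra.
  - intros t Ht. unfold Dz, alpha_eps, helix, phi_eps, phi_b, alpha2, cz, mk3; simpl.
    destruct (Rle_dec t ((INR n + 1) * eps / 2)); [|lra].
    destruct (Rle_dec (t/eps) ((INR n - 1)/2)).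
    { exfalso. assert ((INR n - 1)/2 < t/eps) by (apply divlt; lra). lra. }
    destruct (Rle_dec (t/eps) ((INR n + 1)/2)). reflexivity.
    exfalso; apply n1. apply divle; lra.
Qed.

Definition UC n eps t := / r_eps n eps * (t - (INR n + 1) * eps / 2).
Lemma UC_d n eps x : Derive (UC n eps) x = / r_eps n eps.
Proof. apply is_derive_unique. unfold UC. auto_derive; auto. ring. Qed.
Lemma UC_e n eps x : ex_derive (UC n eps) x.
Proof. unfold UC. auto_derive; auto. Qed.

Lemma circ_facts n eps z : Hyp n eps z ->
  let L := (INR n + 1) * eps in
  0 < r_eps n eps /\ Rabs (r_eps n eps) <= 1 /\
  Rabs (/ r_eps n eps - 4*PI) <= 128 * L /\ Rabs (/ r_eps n eps) <= 32 /\
  Rabs (r_eps n eps - /(4*PI)) <= L /\ Rabs (rho_eps eps) <= L /\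
  Rabs ((INR n + 1) * eps / 2) <= L /\ 0 <= L /\
  (forall t, 0 <= t <= 1/4 -> Rabs (UC n eps t - 4*PI*t) <= 48 * L).
Proof.
  intros H L. facts H.
  assert (HL0 : 0 <= L) by (unfold L; nra).
  assert (Hd : 1/8 <= /4 - L) by (unfold L; lra).
  assert (Hr : r_eps n eps = (/4 - L) / PI) by reflexivity.
  assert (Hr0 : 0 < r_eps n eps).
  { rewrite Hr. unfold Rdiv. apply Rmult_lt_0_compat; [lra|apply Rinv_0_lt_compat; lra]. }
  assert (Hir : / r_eps n eps = PI * / (/4 - L)).
  { rewrite Hr. field. lra. }
  assert (Hid : 0 < / (/4 - L) <= 8).
  { split. apply Rinv_0_lt_compat; lra.
    apply Rmult_le_reg_l with (/4 - L). lra. rewrite Rinv_r by lra. lra. }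
  assert (E1 : / r_eps n eps - 4*PI = 4 * PI * L * / (/4 - L)).
  { rewrite Hir. field. lra. }
  assert (B1 : Rabs (/ r_eps n eps - 4*PI) <= 128 * L).
  { rewrite E1. rewrite Rabs_pos_eq.
    assert (4*PI*L * /(/4-L) <= 16 * L * 8). { apply Rmult_le_compat; nra. } lra.
    assert (0 <= 4 * PI * L) by nra. nra. }
  assert (B2 : Rabs (/ r_eps n eps) <= 32).
  { rewrite Rabs_pos_eq by (left; apply Rinv_0_lt_compat; auto). rewrite Hir.
    assert (PI * / (/4 - L) <= 4 * 8) by (apply Rmult_le_compat; lra). lra. }
  repeat split; auto.
  - rewrite Rabs_pos_eq by lra. rewrite Hr. unfold Rdiv.
    assert (/PI <= 1/2). { apply Rmult_le_reg_l with PI. lra. rewrite Rinv_r by lra. lra. }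
    assert (0 < /PI) by (apply Rinv_0_lt_compat; lra). nra.
  - assert (E : r_eps n eps - /(4*PI) = - (L * / PI)) by (rewrite Hr; field; lra).
    rewrite E, Rabs_Ropp. rewrite Rabs_pos_eq.
    assert (/PI <= 1/2). { apply Rmult_le_reg_l with PI. lra. rewrite Rinv_r by lra. lra. }
    nra. assert (0 < /PI) by (apply Rinv_0_lt_compat; lra). nra.
  - unfold L. assert (eps <= (INR n + 1)*eps) by nra. lra.
  - rewrite Rabs_pos_eq; unfold L; nra.
  - intros t Ht. unfold UC.
    replace (/ r_eps n eps * (t - (INR n + 1) * eps / 2) - 4 * PI * t)
      with ((/ r_eps n eps - 4*PI) * t - / r_eps n eps * ((INR n + 1) * eps / 2)) by ring.
    assert (Rabs t <= 1/4) by (apply Rabs_le; lra).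
    assert (Rabs ((INR n + 1) * eps / 2) <= L / 2) by (rewrite Rabs_pos_eq; unfold L; nra).
    bound. nra.
Qed.

Lemma sin_lip a b : Rabs (sin a - sin b) <= Rabs (a - b).
Proof.
  replace (Rabs (a - b)) with (1 * Rabs (a - b)) by ring.
  apply bounded_variation with (dh := cos). intros t _. split.
  apply is_derive_Reals. apply derivable_pt_lim_sin. apply ab_cos.
Qed.
Lemma cos_lip a b : Rabs (cos a - cos b) <= Rabs (a - b).
Proof.
  replace (Rabs (a - b)) with (1 * Rabs (a - b)) by ring.
  apply bounded_variation with (dh := fun t => - sin t). intros t _. split.
  apply is_derive_Reals. apply derivable_pt_lim_cos. apply ab_opp, ab_sin.
Qed.

Ltac cfacts H := destruct (circ_facts _ _ _ H) as [Cr0 [Cr1 [Cir [Cir2 [Cra [Crho [Cc [CL0 CU]]]]]]]].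

Lemma QCx n eps z : Hyp n eps z ->
  Qpiece (Dx n eps) ((INR n + 1)*eps/2) (/4 - (INR n + 1)*eps/2) (1000 * ((INR n + 1) * eps)).
Proof.
  intros H. facts H. cfacts H.
  exists (fun t => rho_eps eps + r_eps n eps - r_eps n eps * cos (UC n eps t) - /(4*PI) * (1 - cos (4*PI*t))).
  exists (fun t => sin (UC n eps t) - sin (4*PI*t)).
  exists (fun t => / r_eps n eps * cos (UC n eps t) - 4*PI*cos(4*PI*t)).
  refine (conj _ (conj _ (conj _ (conj _ _)))).
  - intros x. auto_derive; auto using UC_e. rewrite UC_d. field. lra.
  - intros x. auto_derive; auto using UC_e. rewrite UC_d. ring.
  - intros x. match goal with |- continuous ?f _ => apply (ex_derive_continuous f) end. auto_derive; auto using UC_e.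
  - intros t Ht. assert (0 <= t <= 1/4) by nra.
    pose proof (CU t H0).
    pose proof (sin_lip (UC n eps t) (4*PI*t)). pose proof (cos_lip (UC n eps t) (4*PI*t)).
    split; [|split].
    + match goal with |- Rabs ?e <= _ => replace e with
        (rho_eps eps + (r_eps n eps - /(4*PI)) - (r_eps n eps - /(4*PI)) * cos (UC n eps t)
         - /(4*PI) * (cos (UC n eps t) - cos (4*PI*t))) by ring end.
      bound. nra.
    + bound. nra.
    + match goal with |- Rabs ?e <= _ => replace e with
        ((/ r_eps n eps - 4*PI) * cos (UC n eps t) + 4*PI * (cos (UC n eps t) - cos (4*PI*t))) by ring end.
      bound. nra.
  - intros t Ht. unfold Dx, alpha_eps, stadium, alpha2, cx, mk3, UC; simpl.
    destruct (Rle_dec t ((INR n + 1) * eps / 2)); [lra|].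
    destruct (Rle_dec t (/4 - (INR n + 1) * eps / 2)); [reflexivity|lra].
Qed.

Lemma QCy n eps z : Hyp n eps z ->
  Qpiece (Dy n eps) ((INR n + 1)*eps/2) (/4 - (INR n + 1)*eps/2) (1000 * ((INR n + 1) * eps)).
Proof.
  intros H. facts H. cfacts H.
  exists (fun t => (INR n + 1) * eps / 2 + r_eps n eps * sin (UC n eps t) - /(4*PI) * sin (4*PI*t)).
  exists (fun t => cos (UC n eps t) - cos (4*PI*t)).
  exists (fun t => - (/ r_eps n eps * sin (UC n eps t)) + 4*PI*sin(4*PI*t)).
  refine (conj _ (conj _ (conj _ (conj _ _)))).
  - intros x. auto_derive; auto using UC_e. rewrite UC_d. field. lra.
  - intros x. auto_derive; auto using UC_e. rewrite UC_d. ring.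
  - intros x. match goal with |- continuous ?f _ => apply (ex_derive_continuous f) end. auto_derive; auto using UC_e.
  - intros t Ht. assert (0 <= t <= 1/4) by nra.
    pose proof (CU t H0).
    pose proof (sin_lip (UC n eps t) (4*PI*t)). pose proof (cos_lip (UC n eps t) (4*PI*t)).
    split; [|split].
    + match goal with |- Rabs ?e <= _ => replace e with
        ((INR n + 1) * eps / 2 + (r_eps n eps - /(4*PI)) * sin (UC n eps t)
         + /(4*PI) * (sin (UC n eps t) - sin (4*PI*t))) by ring end.
      bound. nra.
    + bound. nra.
    + match goal with |- Rabs ?e <= _ => replace e with
        (- ((/ r_eps n eps - 4*PI) * sin (UC n eps t)) - 4*PI * (sin (UC n eps t) - sin (4*PI*t))) by ring end.
      bound. nra.
  - intros t Ht. unfold Dy, alpha_eps, stadium, alpha2, cy, mk3, UC; simpl.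
    destruct (Rle_dec t ((INR n + 1) * eps / 2)); [lra|].
    destruct (Rle_dec t (/4 - (INR n + 1) * eps / 2)); [reflexivity|lra].
Qed.

Lemma Qz0 n eps z p q K : Hyp n eps z -> (INR n + 1)*eps/2 <= p -> 0 <= K -> Qpiece (Dz n eps z) p q K.
Proof.
  intros H Hp HK. facts H.
  exists (fun _ => 0), (fun _ => 0), (fun _ => 0).
  refine (conj _ (conj _ (conj _ (conj _ _)))).
  - intros x. auto_derive; auto.
  - intros x. auto_derive; auto.
  - intros x. apply (ex_derive_continuous (fun _ : R => 0)). auto_derive; auto.
  - intros t Ht. rewrite Rabs_R0. lra.
  - intros t Ht. unfold Dz, alpha_eps, stadium, alpha2, cz, mk3; simpl.
    destruct (Rle_dec t ((INR n + 1) * eps / 2)); [lra|].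
    destruct (Rle_dec t (/4 - (INR n + 1) * eps / 2)); simpl; ring.
Qed.

Lemma QSx n eps z : Hyp n eps z ->
  Qpiece (Dx n eps) (/4 - (INR n + 1)*eps/2) (/4) 50.
Proof.
  intros H. facts H. cfacts H.
  exists (fun t => rho_eps eps + 2 * r_eps n eps - /(4*PI) * (1 - cos (4*PI*t))).
  exists (fun t => - sin (4*PI*t)).
  exists (fun t => - (4*PI*cos(4*PI*t))).
  refine (conj _ (conj _ (conj _ (conj _ _)))).
  - intros x. auto_derive; auto. field. lra.
  - intros x. auto_derive; auto. ring.
  - intros x. match goal with |- continuous ?f _ => apply (ex_derive_continuous f) end. auto_derive; auto.
  - intros t Ht. assert (Rabs 2 <= 2) by (rewrite Rabs_pos_eq; lra). split; [|split].
    + bound. nra.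
    + bound. nra.
    + bound. nra.
  - intros t Ht. unfold Dx, alpha_eps, stadium, alpha2, cx, mk3; simpl.
    destruct (Rle_dec t ((INR n + 1) * eps / 2)); [lra|].
    destruct (Rle_dec t (/4 - (INR n + 1) * eps / 2)); [lra|reflexivity].
Qed.

Lemma QSy n eps z : Hyp n eps z ->
  Qpiece (Dy n eps) (/4 - (INR n + 1)*eps/2) (/4) 50.
Proof.
  intros H. facts H.
  exists (fun t => /4 - t - /(4*PI) * sin (4*PI*t)).
  exists (fun t => -1 - cos (4*PI*t)).
  exists (fun t => 4*PI*sin(4*PI*t)).
  refine (conj _ (conj _ (conj _ (conj _ _)))).
  - intros x. auto_derive; auto. field. lra.
  - intros x. auto_derive; auto. ring.
  - intros x. match goal with |- continuous ?f _ => apply (ex_derive_continuous f) end. auto_derive; auto.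
  - intros t Ht. assert (Rabs (/4 - t) <= 1) by (apply Rabs_le; nra). split; [|split].
    + bound. nra.
    + match goal with |- Rabs ?e <= _ => replace e with (-(1) - cos (4*PI*t)) by ring end.
      bound. nra.
    + bound. nra.
  - intros t Ht. unfold Dy, alpha_eps, stadium, alpha2, cy, mk3; simpl.
    destruct (Rle_dec t ((INR n + 1) * eps / 2)); [lra|].
    destruct (Rle_dec t (/4 - (INR n + 1) * eps / 2)); [lra|reflexivity].
Qed.

Lemma lim_gen (Fn : R -> R) (M : R) : 0 < M ->
  (exists e0, 0 < e0 /\ forall eps, 0 < eps < e0 -> 0 <= Fn eps <= sqrt (M * eps)) ->
  filterlim Fn (at_right 0) (locally 0).
Proof.
  intros HM [e0 [He0 HB]].
  intros P [eta Heta].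
  assert (Hd : 0 < Rmin e0 (eta*eta/M)).
  { apply Rmin_pos; auto. apply Rdiv_lt_0_compat; auto. pose proof (cond_pos eta). nra. }
  exists (mkposreal _ Hd). intros y Hy Hy0. apply Heta.
  unfold ball in Hy; simpl in Hy; unfold AbsRing_ball, abs, minus, plus, opp in Hy; simpl in Hy.
  rewrite Ropp_0, Rplus_0_r, Rabs_pos_eq in Hy by lra.
  pose proof (Rmin_l e0 (eta*eta/M)). pose proof (Rmin_r e0 (eta*eta/M)).
  destruct (HB y) as [B0 B1]; [lra|].
  unfold ball; simpl; unfold AbsRing_ball, abs, minus, plus, opp; simpl.
  rewrite Ropp_0, Rplus_0_r, Rabs_pos_eq by auto.
  pose proof (cond_pos eta) as Ep.
  assert (Hmy : M * y < eta * eta).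
  { assert (Hy2 : y < eta*eta/M) by lra. apply Rmult_lt_compat_l with (r := M) in Hy2; auto.
    replace (M * (eta*eta/M)) with (eta*eta) in Hy2 by (field; lra). lra. }
  assert (Hs : sqrt (M*y) < sqrt (eta*eta)) by (apply sqrt_lt_1_alt; split; nra).
  rewrite sqrt_square in Hs by lra. lra.
Qed.

Lemma main_bound n eps z (cv : R -> v3) : Hyp n eps z ->
  (forall t, cx (cv t) = cx (g_pos n eps t) /\ cy (cv t) = cy (g_pos n eps t)
     /\ cz (cv t) = z * cz (g_pos n eps t)) ->
  W22dist cv tpc_pi <= sqrt (1215000 * (INR n + 1) * eps).
Proof.
  intros H Hc. facts H.
  set (L := (INR n + 1) * eps).
  assert (HL0 : 0 <= L) by (unfold L; nra).
  assert (P1 : 0 < (INR n - 1) * eps / 2 < (INR n + 1) * eps / 2) by (split; nra).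
  assert (P2 : (INR n + 1) * eps / 2 < 1/4 - (INR n + 1) * eps / 2) by lra.
  assert (Bx : W22sq (fun t => cx (cv t) - cx (tpc_pi t)) <= 12*(50^2*(2*((INR n + 1) * eps / 2)) + (1000*L)^2*(1/4))).
  { apply total with (D := Dx n eps) (p1 := (INR n - 1) * eps / 2); auto.
    - apply QR_x. intros t; apply Hc.
    - apply (QA1x n eps z H).
    - apply (QA2x n eps z H).
    - replace (1/4) with (/4) by field. apply (QCx n eps z H).
    - replace (1/4) with (/4) by field. apply (QSx n eps z H). }
  assert (By : W22sq (fun t => cy (cv t) - cy (tpc_pi t)) <= 12*(50^2*(2*((INR n + 1) * eps / 2)) + (1000*L)^2*(1/4))).
  { apply total with (D := Dy n eps) (p1 := (INR n - 1) * eps / 2); auto.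
    - apply QR_y. intros t; apply Hc.
    - apply (QHy n eps z); auto; lra.
    - apply (QHy n eps z); auto; lra.
    - replace (1/4) with (/4) by field. apply (QCy n eps z H).
    - replace (1/4) with (/4) by field. apply (QSy n eps z H). }
  assert (Bz : W22sq (fun t => cz (cv t) - cz (tpc_pi t)) <= 12*(50^2*(2*((INR n + 1) * eps / 2)) + (1000*L)^2*(1/4))).
  { apply total with (D := Dz n eps z) (p1 := (INR n - 1) * eps / 2); auto.
    - apply QR_z. intros t; apply Hc.
    - apply (QA1z n eps z H).
    - apply (QA2z n eps z H).
    - apply (Qz0 n eps z); auto; lra.
    - apply (Qz0 n eps z); auto; lra. }
  unfold W22dist. apply sqrt_le_1_alt.
  assert (HLL : L * L <= L / 8) by (unfold L in *; nra).
  replace (1215000 * (INR n + 1) * eps) with (1215000 * L) by (unfold L; ring).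
  replace ((INR n + 1) * eps / 2) with (L/2) in Bx, By, Bz by (unfold L; field).
  nra.
Qed.

Lemma odd_ge3 (b : Z) : Z.odd b = true -> b <> 1%Z -> b <> (-1)%Z -> (3 <= b \/ b <= -3)%Z.
Proof.
  intros Ho H1 H2. apply Z.odd_spec in Ho. destruct Ho as [m Hm]. lia.
Qed.

Theorem lemma5p1 (b : Z) :
  Z.odd b = true -> b <> 1%Z -> b <> (-1)%Z ->
  filterlim (fun eps => W22dist (g_eps b eps) tpc_pi) (at_right 0) (locally 0).
Proof.
  intros Ho H1 H2.
  destruct (odd_ge3 b Ho H1 H2) as [Hb | Hb].
  - set (n := Z.to_nat b).
    assert (Hn : (3 <= n)%nat) by (unfold n; lia).
    assert (HnR : 3 <= INR n) by (apply le_INR in Hn; simpl in Hn; lra).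
    apply lim_gen with (M := 1215000 * (INR n + 1)). nra.
    exists (1/(8 * (INR n + 1))). split.
    { apply Rdiv_lt_0_compat; lra. }
    intros eps Heps. split.
    + unfold W22dist; apply sqrt_pos.
    + apply main_bound with (z := 1).
      * repeat split; auto. lra.
        destruct Heps as [_ He]. apply Rmult_le_reg_l with (8 * (INR n + 1)). lra.
        replace (8 * (INR n + 1) * (1/8)) with (INR n + 1) by field.
        replace (8 * (INR n + 1) * ((INR n + 1) * eps)) with ((INR n + 1) * (8 * (INR n + 1) * eps)) by ring.
        assert (8 * (INR n + 1) * eps < 1).
        { apply Rmult_lt_compat_l with (r := 8*(INR n + 1)) in He; [|lra].
          replace (8 * (INR n + 1) * (1 / (8 * (INR n + 1)))) with 1 in He by (field; lra). exact He. }
        nra. ring.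
      * intros t. unfold g_eps.
        assert (E : Z.ltb 0 b = true) by (apply Z.ltb_lt; lia). rewrite E.
        fold n. repeat split; ring.
  - set (n := Z.to_nat (- b)).
    assert (Hn : (3 <= n)%nat) by (unfold n; lia).
    assert (HnR : 3 <= INR n) by (apply le_INR in Hn; simpl in Hn; lra).
    apply lim_gen with (M := 1215000 * (INR n + 1)). nra.
    exists (1/(8 * (INR n + 1))). split.
    { apply Rdiv_lt_0_compat; lra. }
    intros eps Heps. split.
    + unfold W22dist; apply sqrt_pos.
    + apply main_bound with (z := -1).
      * repeat split; auto. lra.
        destruct Heps as [_ He]. apply Rmult_le_reg_l with (8 * (INR n + 1)). lra.
        replace (8 * (INR n + 1) * (1/8)) with (INR n + 1) by field.
        replace (8 * (INR n + 1) * ((INR n + 1) * eps)) with ((INR n + 1) * (8 * (INR n + 1) * eps)) by ring.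
        assert (8 * (INR n + 1) * eps < 1).
        { apply Rmult_lt_compat_l with (r := 8*(INR n + 1)) in He; [|lra].
          replace (8 * (INR n + 1) * (1 / (8 * (INR n + 1)))) with 1 in He by (field; lra). exact He. }
        nra. ring.
      * intros t. unfold g_eps.
        assert (E : Z.ltb 0 b = false) by (apply Z.ltb_ge; lia). rewrite E.
        fold n. unfold reflz, cx, cy, cz, mk3; simpl. repeat split; ring.
Qed.
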